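(* Let $n,t\ge1$ be integers and $b\ge0$ real. Consider the negative-fill variable-processor cup game on $n$ cups, starting from all fills $0$, played for $t$ rounds against a greedy emptier. The following are equivalent: (1) the filler can guarantee that after $t$ rounds at least one cup has fill $\ge b$; (2) the filler can guarantee that after $t$ rounds at least one cup has fill $\le -b$; (3) the filler can guarantee that after $t$ rounds at least one cup has fill $\ge b$ or at least one cup has fill $\le -b$.
   Context: Negative-fill variable-processor cup game: real fills $x_1,\dots,x_n$; in each round the filler chooses an integer $1\le p\le n$ and reals $a_i\in[0,1]$ with $\sum_i a_i=p$ and adds $a_i$ to cup $i$; then the emptier chooses $p$ distinct cups and subtracts exactly $1$ from each (fills may become negative). The greedy emptier always subtracts from the $p$ fullest cups after the filler's move. *)

(* Defs.v *)
From HB Require Import structures.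
From mathcomp Require Import all_boot all_order all_algebra.
From mathcomp Require Import reals.
Set Implicit Arguments. Unset Strict Implicit. Unset Printing Implicit Defensive.
Import Order.TTheory GRing.Theory Num.Theory.
Local Open Scope ring_scope.

Definition config (R : realType) (n : nat) := 'I_n -> R.

Definition valid_fill (R : realType) (n : nat) (p : nat) (a : 'I_n -> R) : Prop :=
  [/\ (1 <= p <= n)%N, (forall i, 0 <= a i <= 1) & \sum_(i < n) a i = p%:R].

Definition fill_cups (R : realType) (n : nat) (x a : config R n) : config R n :=
  fun i => x i + a i.

Definition greedy_choice (R : realType) (n : nat) (y : config R n) (p : nat)
  (S : {set 'I_n}) : Prop :=
  #|S| = p /\ (forall i j, i \in S -> j \notin S -> y j <= y i).

Definition empty_cups (R : realType) (n : nat) (y : config R n) (S : {set 'I_n})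
  : config R n := fun i => y i - (i \in S)%:R.

Fixpoint can_force (R : realType) (n : nat) (goal : config R n -> Prop)
  (k : nat) (x : config R n) : Prop :=
  match k with
  | 0 => goal x
  | k'.+1 => exists (p : nat) (a : config R n),
      valid_fill p a /\
      forall S : {set 'I_n}, greedy_choice (fill_cups x a) p S ->
        can_force goal k' (empty_cups (fill_cups x a) S)
  end.

Definition init_config (R : realType) (n : nat) : config R n := fun _ => 0.

(* Main.v *)
Require Import Defs.
From HB Require Import structures.
From mathcomp Require Import all_boot all_order all_algebra.
From mathcomp Require Import reals.
From mathcomp Require Import fingroup perm zify lra.
From Stdlib Require Import FunctionalExtensionality.
Import Order.TTheory GRing.Theory Num.Theory.
Local Open Scope ring_scope.
Set Implicit Arguments. Unset Strict Implicit.

Lemma cf_mono (R : realType) n (g1 g2 : config R n -> Prop) :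
  (forall z, g1 z -> g2 z) -> forall k x, can_force g1 k x -> can_force g2 k x.
Proof.
move=> H; elim=> [|k IH] x /=; first exact: H.
case=> p [a [Hv HS]]; exists p, a; split=> // S HS'; exact: IH (HS S HS').
Qed.

Lemma greedy_exists (R : realType) n (y : config R n) p :
  (p <= n)%N -> exists S, greedy_choice y p S.
Proof.
elim: p => [|p IH] Hp.
  exists set0; split; first by rewrite cards0.
  by move=> i j; rewrite inE.
have [S [HSc HS]] := IH (ltnW Hp).
have : (0 < #|~: S|)%N.
  have := cardsC S; rewrite card_ord; lia.
case/card_gt0P => j0 Hj0.
case: (arg_maxP y Hj0) => j Hj1 Hmax.
have Hj : j \notin S.
  have : j \in ~: S := Hj1. by rewrite inE.
exists (j |: S); split.
  by rewrite cardsU1 -HSc Hj.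
move=> i k; rewrite !inE negb_or => /orP [/eqP -> | Hi] /andP [Hkj Hk].
  by apply: Hmax; have : k \in ~: S by rewrite inE. 
exact: HS.
Qed.
Lemma cf_perm (R : realType) n (g : config R n -> Prop) :
  (forall z (s : {perm 'I_n}), g z -> g (fun i => z (s i))) ->
  forall k x (s : {perm 'I_n}), can_force g k x -> can_force g k (fun i => x (s i)).
Proof.
move=> Hg; elim=> [|k IH] x s /=; first exact: Hg.
case=> p [a [[Hp Ha Hs] HS]]; exists p, (fun i => a (s i)); split.
  split=> //; rewrite -Hs; exact: (esym (reindex_inj (@perm_inj _ s))).
move=> S [HSc HSg].
pose S0 := ((s^-1)%g @^-1: S).
have HS0 : greedy_choice (fill_cups x a) p S0.
  split; first by rewrite /S0 card_preimset //; exact: perm_inj.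
  move=> i j; rewrite !inE => Hi Hj; have := HSg _ _ Hi Hj.
  by rewrite /fill_cups !permKV.
have := IH _ s (HS S0 HS0).
congr can_force; apply: functional_extensionality => i.
by rewrite /empty_cups /fill_cups /S0 inE permK.
Qed.

Lemma set_eq_card (n : nat) (A B : {set 'I_n}) :
  #|A| = #|B| -> A :\: B = set0 -> A = B.
Proof.
move=> Hc /eqP; rewrite setD_eq0 => Hsub.
by apply/eqP; rewrite eqEcard Hsub Hc leqnn.
Qed.

Lemma tie (R : realType) n (y : config R n) p S :
  greedy_choice y p S -> forall m S0, (#|S0 :\: S| <= m)%N -> greedy_choice y p S0 ->
  exists s : {perm 'I_n}, forall i, y i - (i \in S)%:R = y (s i) - (s i \in S0)%:R.
Proof.
move=> [HSc HSg]; elim=> [|m IH] S0 Hm [HS0c HS0g].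
  have E : S0 = S.
    apply: set_eq_card; first by rewrite HSc HS0c.
    by apply/eqP; rewrite -cards_eq0 -leqn0.
  by exists 1%g => i; rewrite perm1 E.
case: (eqVneq (S0 :\: S) set0) => [E | /set0Pn [b Hb]].
  have E' : S0 = S by apply: set_eq_card; rewrite ?HSc ?HS0c.
  by exists 1%g => i; rewrite perm1 E'.
move: (Hb); rewrite inE => /andP [HbS HbS0].
case: (eqVneq (S :\: S0) set0) => [E | /set0Pn [a Ha]].
  have E' : S = S0 by apply: set_eq_card; rewrite ?HSc ?HS0c.
  by move: HbS; rewrite E' HbS0.
move: (Ha); rewrite inE => /andP [HaS0 HaS].
have yab : y a = y b.
  by apply/le_anti; rewrite (HS0g b a) // (HSg a b).
have ab : a != b by apply/eqP => E; move: HaS; rewrite E (negbTE HbS).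
pose t := tperm a b.
have yt : forall i, y (t i) = y i.
  move=> i; rewrite /t; case: (eqVneq i a) => [->|ia]; first by rewrite tpermL.
  case: (eqVneq i b) => [->|ib]; first by rewrite tpermR.
  by rewrite tpermD // eq_sym.
pose S1 := t @^-1: S0.
have HS1 : greedy_choice y p S1.
  split; first by rewrite /S1 card_preimset //; exact: perm_inj.
  move=> i j; rewrite !inE => Hi Hj; have := HS0g _ _ Hi Hj.
  by rewrite !yt.
have ES1 : S1 :\: S = (S0 :\: S) :\ b.
  apply/setP => i; rewrite !inE /t.
  case: (eqVneq i a) => [->|ia]; first by rewrite tpermL HaS ab.
  case: (eqVneq i b) => [->|ib]; first by rewrite tpermR (negbTE HaS0) andbF.
  by rewrite tpermD // eq_sym.
have Hm1 : (#|S1 :\: S| <= m)%N.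
  move: Hm; rewrite ES1 (cardsD1 b (S0 :\: S)) Hb add1n ltnS.
  by [].
have [s1 Hs1] := IH S1 Hm1 HS1.
exists (s1 * t)%g => i; rewrite Hs1 permM /S1 inE yt.
by [].
Qed.

Lemma cf_or (R : realType) n (A B : config R n -> Prop) :
  (forall z (s : {perm 'I_n}), A z -> A (fun i => z (s i))) ->
  (forall z (s : {perm 'I_n}), B z -> B (fun i => z (s i))) ->
  forall k x, can_force (fun z => A z \/ B z) k x -> can_force A k x \/ can_force B k x.
Proof.
move=> HA HB; elim=> [|k IH] x /=; first by [].
case=> p [a [Hv HS]].
have [Hp _ _] := Hv.
have Hpn : (p <= n)%N by case/andP: Hp.
have [S0 HS0] := greedy_exists (fill_cups x a) Hpn.
have Hall : forall (g : config R n -> Prop),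
   (forall z (s : {perm 'I_n}), g z -> g (fun i => z (s i))) ->
   can_force g k (empty_cups (fill_cups x a) S0) ->
   exists p a, valid_fill p a /\ forall S, greedy_choice (fill_cups x a) p S ->
     can_force g k (empty_cups (fill_cups x a) S).
  move=> g Hg H; exists p, a; split=> // S HSS.
  have [s Hs] := tie HSS (leqnn _) HS0.
  have -> : empty_cups (fill_cups x a) S =
     (fun i => empty_cups (fill_cups x a) S0 (s i)).
    by apply: functional_extensionality => i; exact: Hs.
  exact: cf_perm.
case: (IH _ (HS S0 HS0)) => H; [left|right]; exact: Hall.
Qed.

Lemma cf_neg (R : realType) n k (g : config R n -> Prop) x :
  can_force g k x -> can_force (fun z => g (fun i => - z i)) k (fun i => - x i).
Proof.
elim: k g x => [|k IH] g x /=.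
  have -> : (fun i => - - x i) = x by apply: functional_extensionality => i; rewrite opprK.
  by [].
move=> [p [a [[Hp Ha Hs0] HS]]].
have Hs : \sum_(i < n) a i = p%:R := Hs0.
have Hpn : (p <= n)%N by case/andP: Hp.
case: (eqVneq p n) => [Epn | Hpn'].
  subst p.
  have a1 : forall i, a i = 1.
    have H0 : \sum_(i < n) (1 - a i) = 0.
      rewrite sumrB sumr_const card_ord; apply/eqP; rewrite subr_eq0; apply/eqP.
      by symmetry; exact: Hs0.
    move=> i; have := psumr_eq0P (P := xpredT) (fun i _ => _) H0 (i := i) isT.
    move=> /(_ _) H; apply/eqP; rewrite eq_sym -subr_eq0; apply/eqP; apply: H.
    by move=> j; have := Ha j; case/andP => _; rewrite subr_ge0.
  exists n, a; split.
    by split.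
  move=> S [HSc _].
  have ST : S = setT by apply/eqP; rewrite eqEcard subsetT cardsT card_ord HSc.
  have HT : greedy_choice (fill_cups x a) n setT.
    by split; [rewrite cardsT card_ord | move=> i j _; rewrite inE].
  have := IH g _ (HS _ HT); congr can_force.
  apply: functional_extensionality => i.
  by rewrite /empty_cups /fill_cups ST inE a1 /= !addrK.
exists (n - p)%N, (fun i => 1 - a i); split.
  split.
  - apply/andP; split; lia.
  - by move=> i; have := Ha i; case/andP => H1 H2; apply/andP; split; lra.
  - rewrite sumrB sumr_const card_ord natrB //; congr (_ - _); exact: Hs0.
move=> S' [HSc HSg].
have HS1 : greedy_choice (fill_cups x a) p (~: S').
  split; first by have := cardsC S'; rewrite card_ord; lia.
  move=> i j; rewrite !inE negbK => Hi Hj; have := HSg _ _ Hj Hi; rewrite /fill_cups.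
  lra.
have := IH g _ (HS _ HS1); congr can_force.
apply: functional_extensionality => i.
rewrite /empty_cups /fill_cups inE; case: (i \in S') => /=; rewrite ?mulr0n ?mulr1n; lra.
Qed.

Theorem propositionA1 (R : realType) (n t : nat) (b : R) :
  (1 <= n)%N -> (1 <= t)%N -> 0 <= b ->
  let F1 := can_force (fun x : config R n => exists i : 'I_n, b <= x i) t (@init_config R n) in
  let F2 := can_force (fun x : config R n => exists i : 'I_n, x i <= - b) t (@init_config R n) in
  let F3 := can_force (fun x : config R n =>
              (exists i : 'I_n, b <= x i) \/ (exists i : 'I_n, x i <= - b)) t (@init_config R n) in
  (F1 <-> F2) /\ (F1 <-> F3).
Proof.
move=> Hn Ht Hb F1 F2 F3.
have P1 : forall (z : config R n) (s : {perm 'I_n}),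
    (exists i, b <= z i) -> exists i, b <= z (s i).
  by move=> z s [i Hi]; exists ((s^-1)%g i); rewrite permKV.
have P2 : forall (z : config R n) (s : {perm 'I_n}),
    (exists i, z i <= - b) -> exists i, z (s i) <= - b.
  by move=> z s [i Hi]; exists ((s^-1)%g i); rewrite permKV.
have neg0 : (fun i : 'I_n => - (@init_config R n) i) = @init_config R n.
  by apply: functional_extensionality => i; rewrite /init_config oppr0.
have F12 : F1 -> F2.
  move=> H; have := cf_neg H; rewrite neg0; apply: cf_mono.
  by move=> z [i Hi]; exists i; lra.
have F21 : F2 -> F1.
  move=> H; have := cf_neg H; rewrite neg0; apply: cf_mono.
  by move=> z [i Hi]; exists i; lra.
split; first by split.
split.
  by apply: cf_mono => z H; left.
by move=> H; case: (cf_or P1 P2 H) => //; exact: F21.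
Qed.
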